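(* Let $\Gamma$ be a set of FOML formulas and $\varphi$ a FOML formula (as defined in the context). If $\Gamma^{\mathrm{ML}},\mathcal{H}(\Gamma\cup\{\varphi\})\models_{\mathrm{ML}}\varphi^{\mathrm{ML}}$, then $\Gamma\models\varphi$.
   Context: FOML syntax. Fix pairwise disjoint, non-empty, denumerable sets $\mathcal{X}$ (rigid variables), $\mathcal{V}$ (flexible variables) and $\mathcal{O}$ (operator symbols with arities). Expressions are given by $e ::= x \mid v \mid op(e,\ldots,e) \mid e=e \mid \mathrm{FALSE} \mid e\Rightarrow e \mid \forall x: e \mid \nabla e$ with $x\in\mathcal{X}$, $v\in\mathcal{V}$, $op\in\mathcal{O}$ applied with the correct arity. Terms and formulas are not distinguished. Only rigid variables are bound. An expression is rigid iff it contains no flexible variable and no subexpression of the form $\nabla e$. FOML semantics. A Kripke model is $\mathcal{M}=(\mathcal{I},\xi,\mathcal{W},R,\zeta,\nabla_\mathcal{M})$, where: - $\mathcal{I}$ is a first-order interpretation whose universe contains distinct values $\mathsf{tt},\mathsf{ff}$, with $\mathcal{I}(op):|\mathcal{I}|^n\to|\mathcal{I}|$; - $\xi:\mathcal{X}\to|\mathcal{I}|$; - $\mathcal{W}$ is a non-empty set of states and $R\subseteq\mathcal{W}^2$; - $\zeta:\mathcal{V}\times\mathcal{W}\to|\mathcal{I}|$; - $\nabla_\mathcal{M}:2^{|\mathcal{I}|}\to|\mathcal{I}|$ satisfies $\nabla_\mathcal{M}(S)=\mathsf{tt}$ iff $S\subseteq\{\mathsf{tt}\}$. Values $[\![e]\!]^\mathcal{M}_w$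 are defined as follows. - $[\![x]\!]_w=\xi(x)$ and $[\![v]\!]_w=\zeta(v,w)$. - $[\![op(\vec e)]\!]_w=\mathcal{I}(op)([\![e_1]\!]_w,\ldots)$. - $[\![e_1=e_2]\!]_w$ is $\mathsf{tt}$ iff the two values are equal, and $\mathsf{ff}$ otherwise. - $[\![\mathrm{FALSE}]\!]_w=\mathsf{ff}$. - $[\![\varphi\Rightarrow\psi]\!]_w=\mathsf{tt}$ iff $[\![\varphi]\!]_w\ne\mathsf{tt}$ or $[\![\psi]\!]_w=\mathsf{tt}$, and $\mathsf{ff}$ otherwise. - $[\![\forall x:\varphi]\!]^\mathcal{M}_w=\mathsf{tt}$ iff $[\![\varphi]\!]^{\mathcal{M}'}_w=\mathsf{tt}$ for all $\mathcal{M}'$ differing from $\mathcal{M}$ only at $\xi(x)$, and $\mathsf{ff}$ otherwise. - $[\![\nabla\varphi]\!]_w=\nabla_\mathcal{M}(\{[\![\varphi]\!]_{w'}:(w,w')\in R\})$. $\mathcal{M},w\models\varphi$ means $[\![\varphi]\!]^\mathcal{M}_w=\mathsf{tt}$. $\Gamma\models\varphi$ iff for every $\mathcal{M}$, if $\mathcal{M},w\models\psi$ for all $\psi\in\Gamma$ and all $w$, then $\mathcal{M},w\models\varphi$ for all $w$. Propositional modal logic ML. Formulas are built from propositional (flexible) variables, $\mathrm{FALSE}$, $\Rightarrow$ and $\nabla$. A Kripke model is $\mathcal{K}=(\mathcal{W},R,\zeta)$ with $\zeta$ assigning $\mathsf{tt}$ or $\mathsf{ff}$ to each variable at each state. The semantics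 is the standard one: $\nabla\varphi$ holds at $w$ iff $\varphi$ holds at every $w'$ with $(w,w')\in R$. $\Gamma\models_{\mathrm{ML}}\varphi$ iff for every $\mathcal{K}$, if every formula of $\Gamma$ holds at all states, then $\varphi$ holds at all states. Coalescing to ML. $e^{\mathrm{ML}}$ is defined by: - $x^{\mathrm{ML}}=[x]$ for $x\in\mathcal{X}$, and $v^{\mathrm{ML}}=v$ for $v\in\mathcal{V}$; - $op(t_1,\ldots,t_n)^{\mathrm{ML}}=[op(t_1,\ldots,t_n)]$; - $(e_1=e_2)^{\mathrm{ML}}=[e_1=e_2]$; - $\mathrm{FALSE}^{\mathrm{ML}}=\mathrm{FALSE}$; - $(e_1\Rightarrow e_2)^{\mathrm{ML}}=e_1^{\mathrm{ML}}\Rightarrow e_2^{\mathrm{ML}}$; - $(\forall x:e)^{\mathrm{ML}}=[\forall x:e]$; - $(\nabla e)^{\mathrm{ML}}=\nabla e^{\mathrm{ML}}$. Here each $[e]$ is a fresh propositional flexible variable, and variables $[e]$ and $[e']$ are identified iff $e$ and $e'$ are $\alpha$-equivalent. $\Gamma^{\mathrm{ML}}=\{\psi^{\mathrm{ML}}:\psi\in\Gamma\}$. For a set $\Delta$ of FOML formulas, $\mathcal{H}(\Delta)$ is the set of all formulas $[e]\Rightarrow\nabla[e]$ such that $[e]$ is a fresh variable introduced in $\Delta^{\mathrm{ML}}$ and $e$ is a rigid expression. *)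

(* Defs.v *)
From Stdlib Require Import List ClassicalEpsilon.
Import ListNotations.

(* Rigid variables, flexible variables and operator symbols are each
   indexed by nat (disjoint by construction); arities are given by a
   function [ar : nat -> nat]. *)
Inductive expr : Type :=
| ERig  (x : nat)
| EFlex (v : nat)
| EOp   (o : nat) (args : list expr)
| EEq   (e1 e2 : expr)
| EFalse
| EImp  (e1 e2 : expr)
| EAll  (x : nat) (e : expr)
| EBox  (e : expr).

Fixpoint wf (ar : nat -> nat) (e : expr) : Prop :=
  match e with
  | ERig _ | EFlex _ | EFalse => True
  | EOp o args => length args = ar o /\
      (fix wfl (l : list expr) : Prop :=
         match l with [] => True | a :: l' => wf ar a /\ wfl l' end) args
  | EEq a b | EImp a b => wf ar a /\ wf ar b
  | EAll _ a | EBox a => wf ar a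
  end.

Fixpoint rigid (e : expr) : Prop :=
  match e with
  | ERig _ | EFalse => True
  | EFlex _ | EBox _ => False
  | EOp _ args =>
      (fix rl (l : list expr) : Prop :=
         match l with [] => True | a :: l' => rigid a /\ rl l' end) args
  | EEq a b | EImp a b => rigid a /\ rigid b
  | EAll _ a => rigid a
  end.

Fixpoint varrel (env : list (nat * nat)) (x y : nat) : Prop :=
  match env with
  | [] => x = y
  | (a, b) :: env' => (x = a /\ y = b) \/ (x <> a /\ y <> b /\ varrel env' x y)
  end.

Fixpoint alpha_env (env : list (nat * nat)) (e1 e2 : expr) : Prop :=
  match e1, e2 with
  | ERig x, ERig y => varrel env x y
  | EFlex v, EFlex v' => v = v'
  | EOp o l1, EOp o' l2 => o = o' /\
      (fix al (l1 l2 : list expr) : Prop :=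
         match l1, l2 with
         | [], [] => True
         | a :: l1', b :: l2' => alpha_env env a b /\ al l1' l2'
         | _, _ => False
         end) l1 l2
  | EEq a b, EEq a' b' => alpha_env env a a' /\ alpha_env env b b'
  | EFalse, EFalse => True
  | EImp a b, EImp a' b' => alpha_env env a a' /\ alpha_env env b b'
  | EAll x a, EAll y b => alpha_env ((x, y) :: env) a b
  | EBox a, EBox b => alpha_env env a b
  | _, _ => False
  end.

Definition alpha_eq (e1 e2 : expr) : Prop := alpha_env [] e1 e2.

Record model : Type := {
  U : Type;
  tt : U;
  ff : U;
  tt_ff : tt <> ff;
  I : nat -> list U -> U;
  xi : nat -> U;
  W : Type;
  W_ne : inhabited W;
  R : W -> W -> Prop;
  zeta : nat -> W -> U;
  nab : (U -> Prop) -> U;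
  nab_spec : forall S : U -> Prop, nab S = tt <-> (forall u, S u -> u = tt)
}.

Definition dec (P : Prop) : {P} + {~ P} := excluded_middle_informative P.

Definition upd {A : Type} (f : nat -> A) (x : nat) (d : A) : nat -> A :=
  fun y => if Nat.eqb y x then d else f y.

Fixpoint eval (M : model) (e : expr) (s : nat -> U M) (w : W M) : U M :=
  match e with
  | ERig x => s x
  | EFlex v => zeta M v w
  | EOp o args => I M o (map (fun a => eval M a s w) args)
  | EEq a b => if dec (eval M a s w = eval M b s w) then tt M else ff M
  | EFalse => ff M
  | EImp a b =>
      if dec (eval M a s w <> tt M \/ eval M b s w = tt M) then tt M else ff M
  | EAll x a =>
      if dec (forall d : U M, eval M a (upd s x d) w = tt M) then tt M else ff M
  | EBox a => nab M (fun u => exists w', R M w w' /\ u = eval M a s w')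
  end.

Definition sat (M : model) (w : W M) (phi : expr) : Prop :=
  eval M phi (xi M) w = tt M.

Definition entails (Gamma : expr -> Prop) (phi : expr) : Prop :=
  forall M : model,
    (forall psi, Gamma psi -> forall w, sat M w psi) ->
    forall w, sat M w phi.

(* propositional variables: original flexible variables v, or fresh [e] *)
Inductive atom : Type :=
| AV (v : nat)
| AB (e : expr).

Inductive mform : Type :=
| MVar (a : atom)
| MFalse
| MImp (p q : mform)
| MBox (p : mform).

(* An ML Kripke model. Variables [e] and [e'] are identified iff e, e'
   are alpha-equivalent; hence the valuation must agree on them. *)
Record kmodel : Type := {
  KW : Type;
  KW_ne : inhabited KW;
  KR : KW -> KW -> Prop;
  Kval : atom -> KW -> bool;
  Kval_alpha : forall e e' w, alpha_eq e e' -> Kval (AB e) w = Kval (AB e') w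
}.

Fixpoint mholds (K : kmodel) (w : KW K) (p : mform) : Prop :=
  match p with
  | MVar a => Kval K a w = true
  | MFalse => False
  | MImp p q => mholds K w p -> mholds K w q
  | MBox p => forall w', KR K w w' -> mholds K w' p
  end.

Definition mentails (Gamma : mform -> Prop) (phi : mform) : Prop :=
  forall K : kmodel,
    (forall psi, Gamma psi -> forall w, mholds K w psi) ->
    forall w, mholds K w phi.

Fixpoint coal (e : expr) : mform :=
  match e with
  | ERig _ => MVar (AB e)
  | EFlex v => MVar (AV v)
  | EOp _ _ => MVar (AB e)
  | EEq _ _ => MVar (AB e)
  | EFalse => MFalse
  | EImp a b => MImp (coal a) (coal b)
  | EAll _ _ => MVar (AB e)
  | EBox a => MBox (coal a)
  end.

Definition coal_set (Gamma : expr -> Prop) : mform -> Prop :=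
  fun p => exists psi, Gamma psi /\ p = coal psi.

Fixpoint box_in (e : expr) (p : mform) : Prop :=
  match p with
  | MVar (AB e') => e' = e
  | MVar (AV _) | MFalse => False
  | MImp p q => box_in e p \/ box_in e q
  | MBox p => box_in e p
  end.

Definition Hset (Delta : expr -> Prop) : mform -> Prop :=
  fun f => exists e, (exists psi, Delta psi /\ box_in e (coal psi)) /\
                     rigid e /\
                     f = MImp (MVar (AB e)) (MBox (MVar (AB e))).

Definition union {A : Type} (P Q : A -> Prop) : A -> Prop := fun a => P a \/ Q a.
Definition add {A : Type} (P : A -> Prop) (x : A) : A -> Prop := fun a => P a \/ a = x.

(* Main.v *)
Require Import Defs.
From Stdlib Require Import List Classical FunctionalExtensionality PropExtensionality.
Import ListNotations.

Section Ind.
Variable P : expr -> Prop.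
Hypothesis H1 : forall x, P (ERig x).
Hypothesis H2 : forall v, P (EFlex v).
Hypothesis H3 : forall o l, Forall P l -> P (EOp o l).
Hypothesis H4 : forall a b, P a -> P b -> P (EEq a b).
Hypothesis H5 : P EFalse.
Hypothesis H6 : forall a b, P a -> P b -> P (EImp a b).
Hypothesis H7 : forall x a, P a -> P (EAll x a).
Hypothesis H8 : forall a, P a -> P (EBox a).
Fixpoint eind (e : expr) : P e :=
  match e with
  | ERig x => H1 x
  | EFlex v => H2 v
  | EOp o l => H3 o l ((fix f (l : list expr) : Forall P l :=
       match l with [] => Forall_nil P | a :: l' => Forall_cons a (eind a) (f l') end) l)
  | EEq a b => H4 a b (eind a) (eind b)
  | EFalse => H5
  | EImp a b => H6 a b (eind a) (eind b)
  | EAll x a => H7 x a (eind a)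
  | EBox a => H8 a (eind a)
  end.
End Ind.

Lemma rigid_const (M : model) (e : expr) : rigid e ->
  forall s w w', eval M e s w = eval M e s w'.
Proof.
  induction e using eind; simpl; intros Hr s w w'; try tauto.
  - f_equal. induction H as [|a l Ha Hl IH]; simpl in *; auto.
    destruct Hr. f_equal; auto.
  - destruct Hr. rewrite (IHe1 H s w w'), (IHe2 H0 s w w'); reflexivity.
  - destruct Hr. rewrite (IHe1 H s w w'), (IHe2 H0 s w w'); reflexivity.
  - destruct (dec _) as [h|h]; destruct (dec _) as [h'|h']; auto; exfalso.
    + apply h'; intro d; rewrite <- (IHe Hr _ w w'); auto.
    + apply h; intro d; rewrite (IHe Hr _ w w'); auto.
Qed.

Lemma alpha_eval (M : model) (e1 : expr) : forall env e2 s1 s2 w,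
  (forall x y, varrel env x y -> s1 x = s2 y) -> alpha_env env e1 e2 ->
  eval M e1 s1 w = eval M e2 s2 w.
Proof.
  induction e1 using eind; intros env e2 s1 s2 w Hs Ha; destruct e2; simpl in *; try tauto.
  - auto.
  - subst; auto.
  - destruct Ha as [<- Hl]. f_equal.
    revert args Hl. induction H as [|a l Ha' Hl' IH]; intros [|b l2] Hl; simpl in *; try tauto.
    destruct Hl. f_equal; eauto.
  - destruct Ha as [Ha1 Ha2]. rewrite (IHe1_1 env _ s1 s2 w Hs Ha1), (IHe1_2 env _ s1 s2 w Hs Ha2); reflexivity.
  - destruct Ha as [Ha1 Ha2]. rewrite (IHe1_1 env _ s1 s2 w Hs Ha1), (IHe1_2 env _ s1 s2 w Hs Ha2); reflexivity.
  - assert (Hs' : forall d, eval M e1 (upd s1 x d) w = eval M e2 (upd s2 x0 d) w).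
    { intro d. apply (IHe1 ((x, x0) :: env)); auto.
      intros u v Huv. unfold upd. simpl in Huv.
      destruct Huv as [[-> ->]|[hu [hv hr]]].
      - rewrite !PeanoNat.Nat.eqb_refl. reflexivity.
      - apply PeanoNat.Nat.eqb_neq in hu, hv. rewrite hu, hv. auto. }
    destruct (dec _) as [h|h]; destruct (dec _) as [h'|h']; auto; exfalso.
    + apply h'; intro d; rewrite <- Hs'; auto.
    + apply h; intro d; rewrite Hs'; auto.
  - f_equal. apply functional_extensionality; intro u. apply propositional_extensionality.
    split; intros [w' [HR Hu]]; exists w'; split; auto; subst; [|symmetry]; eauto.
Qed.

Definition bval (P : Prop) : bool := if dec P then true else false.
Lemma bval_true (P : Prop) : bval P = true <-> P.
Proof. unfold bval; destruct (dec P); split; auto; discriminate. Qed.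

Definition Kv (M : model) (a : atom) (w : W M) : bool :=
  match a with
  | AV v => bval (zeta M v w = tt M)
  | AB e => bval (eval M e (xi M) w = tt M)
  end.

Lemma Kv_alpha (M : model) : forall e e' w, alpha_eq e e' -> Kv M (AB e) w = Kv M (AB e') w.
Proof.
  intros e e' w Ha. simpl. rewrite (alpha_eval M e [] e' (xi M) (xi M) w); auto.
Qed.

Definition KM (M : model) : kmodel :=
  {| KW := W M; KW_ne := W_ne M; KR := R M; Kval := Kv M; Kval_alpha := Kv_alpha M |}.

Lemma coal_ok (M : model) (e : expr) : forall w,
  mholds (KM M) w (coal e) <-> sat M w e.
Proof.
  unfold sat; induction e; intro w; simpl;
    [apply bval_true|apply bval_true|apply bval_true|apply bval_true| |
     |apply bval_true|].
  - split; [tauto|]. intro h; exfalso; apply (tt_ff M); auto.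
  - specialize (IHe1 w); specialize (IHe2 w).
    destruct (dec _) as [h|h]; split; intro H; auto.
    + destruct h as [h|h]; tauto.
    + apply NNPP; intro h2; apply h.
      destruct (classic (eval M e1 (xi M) w = tt M)); tauto.
    + exfalso; apply (tt_ff M); auto.
  - rewrite nab_spec. split.
    + intros H u [w' [HR ->]]. apply IHe; auto.
    + intros H w' HR. apply IHe. apply H; eauto.
Qed.

Theorem theorem2 (ar : nat -> nat) (Gamma : expr -> Prop) (phi : expr) :
  (forall psi, Gamma psi -> wf ar psi) -> wf ar phi ->
  mentails (union (coal_set Gamma) (Hset (add Gamma phi))) (coal phi) ->
  entails Gamma phi.
Proof.
  intros _ _ Hm M HG w. apply coal_ok. apply (Hm (KM M)).
  intros p [[g [Hg ->]]|[e [_ [Hr ->]]]] w'.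
  - apply coal_ok; auto.
  - simpl. intros H1 w'' HR. apply (proj1 (bval_true _)) in H1. apply (proj2 (bval_true _)).
    rewrite (rigid_const M e Hr _ w'' w'); auto.
Qed.
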